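(* Let $q\ge2$, $r\ge1$, $\rho\ge2$, $s\ge1$ be integers, $N=r+\rho-1$ and $n=sN$. For $t=0,\dots,s-1$ let $\mathcal{R}_{t+1}=\{tN+1,\dots,(t+1)N\}$. Let $\mathcal{C}\subseteq Q^n$ ($|Q|=q$) be a code with minimum distance $d$ such that $\mathcal{C}|_{\mathcal{R}_i}$ has minimum distance at least $\rho$ for every $i=1,\dots,s$. Let $$T:=\{\mathbf{i}=(i_1,\dots,i_s)\mid i_1+\cdots+i_s\ge d,\ i_j\in\{0,\rho,\rho+1,\dots,N\}\text{ for all }j\}.$$ Then $$|\mathcal{C}|\le 1+\min\sum_{\mathbf{j}\in\{0,\dots,N\}^s\setminus\{\underline0\}}f_{\mathbf{j}}K^{(N)}_{\mathbf{j}}(\underline0),$$ where the minimum is over all real $(f_{\mathbf{j}})$ satisfying $f_{\mathbf{j}}\ge0$ for $\mathbf{j}\in\{0,\dots,N\}^s\setminus\{\underline0\}$ and $1+\sum_{\mathbf{j}\in\{0,\dots,N\}^s\setminus\{\underline0\}}f_{\mathbf{j}}K^{(N)}_{\mathbf{j}}(\mathbf{i})\le0$ for all $\mathbf{i}\in T$.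
   Context: The Krawtchouk polynomial is $K_j^{(N)}(x)=\sum_{l=0}^j(-1)^l(q-1)^{j-l}\binom xl\binom{N-x}{j-l}$, and for $\mathbf{j}=(j_1,\dots,j_s)$, $\mathbf{x}=(x_1,\dots,x_s)$, $K^{(N)}_{\mathbf{j}}(\mathbf{x})=\prod_{p=1}^sK^{(N)}_{j_p}(x_p)$; $\underline0=(0,\dots,0)$. Minimum distance refers to Hamming distance; $\mathcal{C}|_{\mathcal{R}_i}$ is the projection of $\mathcal{C}$ onto the coordinates in $\mathcal{R}_i$. *)

(* Defs.v *)
From HB Require Import structures.
From mathcomp Require Import all_boot all_order all_algebra.
From mathcomp Require Import reals.
Set Implicit Arguments. Unset Strict Implicit. Unset Printing Implicit Defensive.
Import Order.TTheory GRing.Theory Num.Theory.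
Local Open Scope ring_scope.

Definition hdist (Q : finType) (m : nat) (x y : {ffun 'I_m -> Q}) : nat :=
  #|[set i | x i != y i]|.

Definition min_dist_eq (Q : finType) (m : nat) (C : {set {ffun 'I_m -> Q}})
    (d : nat) : Prop :=
  (exists x, exists y, [/\ x \in C, y \in C, x != y & hdist x y = d]) /\
  (forall x y, x \in C -> y \in C -> x != y -> (d <= hdist x y)%N).

Definition min_dist_ge (Q : finType) (m : nat) (C : {set {ffun 'I_m -> Q}})
    (d : nat) : Prop :=
  forall x y, x \in C -> y \in C -> x != y -> (d <= hdist x y)%N.

Lemma block_idx_proof (s N : nat) (t : 'I_s) (k : 'I_N) : (t * N + k < s * N)%N.
Proof.
have h1 : (t * N + k < t * N + N)%N by rewrite ltn_add2l.
apply: (leq_trans h1); by rewrite addnC -mulSn leq_mul2r ltn_ord orbT.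
Qed.

(* 0-based coordinate t*N + k (k < N), i.e. the (k+1)-th coordinate of
   block R_{t+1} = {tN+1,...,(t+1)N} in 1-based numbering. *)
Definition block_idx (s N : nat) (t : 'I_s) (k : 'I_N) : 'I_(s * N) :=
  Ordinal (block_idx_proof t k).

Definition proj_block (Q : finType) (s N : nat) (t : 'I_s)
    (x : {ffun 'I_(s * N) -> Q}) : {ffun 'I_N -> Q} :=
  [ffun k => x (block_idx t k)].

Definition proj_code (Q : finType) (s N : nat) (t : 'I_s)
    (C : {set {ffun 'I_(s * N) -> Q}}) : {set {ffun 'I_N -> Q}} :=
  [set proj_block t x | x in C].

Definition kraw (R : realType) (q N j x : nat) : R :=
  \sum_(l < j.+1)
     (-1) ^+ l * ((q - 1)%N)%:R ^+ (j - l) * ('C(x, l))%:R * ('C(N - x, j - l))%:R.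

Definition kraw_multi (R : realType) (q N s : nat)
    (j x : {ffun 'I_s -> 'I_N.+1}) : R :=
  \prod_(p < s) kraw R q N (j p) (x p).

Definition zero_idx (s N : nat) : {ffun 'I_s -> 'I_N.+1} := [ffun => ord0].

Definition Tset (s N rho d : nat) : {set {ffun 'I_s -> 'I_N.+1}} :=
  [set i : {ffun 'I_s -> 'I_N.+1} |
     (d <= \sum_(p < s) (i p : nat))%N &&
     [forall p, ((i p : nat) == 0%N) || (rho <= i p)%N]].

(* Main.v *)
Require Import Defs.
From HB Require Import structures.
From mathcomp Require Import all_boot all_order all_algebra.
From mathcomp Require Import reals.
From mathcomp Require Import ring zify.
Set Implicit Arguments. Unset Strict Implicit. Unset Printing Implicit Defensive.
Import Order.TTheory GRing.Theory Num.Theory.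
Local Open Scope ring_scope.


Section Rep.
Variable R : realType.

Definition rep (X : Type) (k : X -> X -> R) : Prop :=
  exists gs : seq (R * (X -> R)),
    forall x y, k x y = \sum_(p <- gs) `|p.1| * p.2 x * p.2 y.

Lemma rep_ext X (k k' : X -> X -> R) :
  (forall x y, k x y = k' x y) -> rep k -> rep k'.
Proof. by move=> e [gs h]; exists gs => x y; rewrite -e h. Qed.

Lemma rep0 X : rep (fun _ _ : X => 0).
Proof. by exists [::] => x y; rewrite big_nil. Qed.

Lemma rep1 X : rep (fun _ _ : X => 1).
Proof. by exists [:: (1, fun _ => 1)] => x y; rewrite big_cons big_nil normr1 !mulr1 addr0. Qed.

Lemma repD X (k1 k2 : X -> X -> R) : rep k1 -> rep k2 -> rep (fun x y => k1 x y + k2 x y).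
Proof.
by move=> [g1 h1] [g2 h2]; exists (g1 ++ g2) => x y; rewrite big_cat h1 h2.
Qed.

Lemma repM X (k1 k2 : X -> X -> R) : rep k1 -> rep k2 -> rep (fun x y => k1 x y * k2 x y).
Proof.
move=> [g1 h1] [g2 h2].
exists [seq (p1.1 * p2.1, fun x => p1.2 x * p2.2 x) | p1 <- g1, p2 <- g2] => x y.
rewrite big_allpairs_dep h1 h2 mulr_suml; apply: eq_bigr => p1 _.
rewrite mulr_sumr; apply: eq_bigr => p2 _ /=.
rewrite normrM; ring.
Qed.

Lemma rep_comp X Y (h : Y -> X) (k : X -> X -> R) : rep k -> rep (fun x y => k (h x) (h y)).
Proof.
move=> [g hg]; exists [seq (p.1, fun x => p.2 (h x)) | p <- g] => x y.
by rewrite big_map hg.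
Qed.

Lemma rep_sum X I (r : seq I) (P : pred I) (F : I -> X -> X -> R) :
  (forall i, rep (F i)) -> rep (fun x y => \sum_(i <- r | P i) F i x y).
Proof.
move=> hF; elim: r => [|i r IH].
  by apply: rep_ext (rep0 X) => x y; rewrite big_nil.
case Pi: (P i).
  by apply: rep_ext (repD (hF i) IH) => x y; rewrite big_cons Pi.
by apply: rep_ext IH => x y; rewrite big_cons Pi.
Qed.

Lemma rep_prod X I (r : seq I) (F : I -> X -> X -> R) :
  (forall i, rep (F i)) -> rep (fun x y => \prod_(i <- r) F i x y).
Proof.
move=> hF; elim: r => [|i r IH].
  by apply: rep_ext (rep1 X) => x y; rewrite big_nil.
by apply: rep_ext (repM (hF i) IH) => x y; rewrite big_cons.
Qed.

Lemma rep_pos (X : finType) (k : X -> X -> R) (C : {pred X}) :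
  rep k -> 0 <= \sum_(x in C) \sum_(y in C) k x y.
Proof.
move=> [g hg].
have -> : \sum_(x in C) \sum_(y in C) k x y =
  \sum_(p <- g) `|p.1| * ((\sum_(x in C) p.2 x) ^+ 2).
  transitivity (\sum_(x in C) \sum_(y in C) \sum_(p <- g) `|p.1| * p.2 x * p.2 y).
    by apply: eq_bigr => x _; apply: eq_bigr => y _; rewrite hg.
  transitivity (\sum_(x in C) \sum_(p <- g) \sum_(y in C) `|p.1| * p.2 x * p.2 y).
    by apply: eq_bigr => x _; rewrite exchange_big.
  rewrite exchange_big; apply: eq_bigr => p _ /=.
  rewrite expr2 mulr_suml mulr_sumr; apply: eq_bigr => x _.
  rewrite mulr_sumr mulr_sumr; apply: eq_bigr => y _; ring.
by apply: sumr_ge0 => p _; rewrite mulr_ge0 // sqr_ge0.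
Qed.

Definition polyrep X (P : X -> X -> {poly R}) := forall j, rep (fun x y => (P x y)`_j).

Lemma polyrepM X (P1 P2 : X -> X -> {poly R}) :
  polyrep P1 -> polyrep P2 -> polyrep (fun x y => P1 x y * P2 x y).
Proof.
move=> h1 h2 j.
apply: rep_ext (rep_sum _ _ (fun i : 'I_j.+1 => repM (h1 i) (h2 (j - i)%N))) => x y.
by rewrite coefM.
Qed.

Lemma polyrep1 X : polyrep (fun _ _ : X => 1).
Proof.
move=> [|j]; first by apply: rep_ext (rep1 X) => x y; rewrite coef1.
by apply: rep_ext (rep0 X) => x y; rewrite coef1.
Qed.

Lemma polyrep_prod X I (r : seq I) (F : I -> X -> X -> {poly R}) :
  (forall i, polyrep (F i)) -> polyrep (fun x y => \prod_(i <- r) F i x y).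
Proof.
move=> hF; elim: r => [|i r IH].
  by move=> j; apply: rep_ext (polyrep1 X j) => x y; rewrite big_nil.
by move=> j; apply: rep_ext (polyrepM (hF i) IH j) => x y; rewrite big_cons.
Qed.

Lemma polyrep_lin X (k : X -> X -> R) : rep k -> polyrep (fun x y => 1 + k x y *: 'X).
Proof.
move=> hk [|[|j]].
- by apply: rep_ext (rep1 X) => x y; rewrite coefD coef1 coefZ coefX mulr0 addr0.
- by apply: rep_ext hk => x y; rewrite coefD coef1 coefZ coefX mulr1 add0r.
- by apply: rep_ext (rep0 X) => x y; rewrite coefD coef1 coefZ coefX mulr0 addr0.
Qed.

End Rep.


Section K.
Variable R : realType.

Definition kap (a : R) (Q : eqType) (b c : Q) : R := if b == c then a else -1.

Lemma sum_delta (Q : finType) (b : Q) (F : Q -> R) : \sum_c (b == c)%:R * F c = F b.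
Proof.
rewrite (bigD1 b) //= eqxx mul1r big1 ?addr0 // => c /negPf.
by rewrite eq_sym => ->; rewrite mul0r.
Qed.

Lemma rep_kap (Q : finType) : (0 < #|Q|)%N -> rep (@kap ((#|Q| - 1)%N%:R) Q).
Proof.
move=> hQ; set qq : R := #|Q|%:R.
have qq0 : 0 < qq by rewrite ltr0n.
exists [seq (qq^-1, fun b => (b == c)%:R * qq - 1) | c <- index_enum Q] => b b'.
rewrite big_map /=.
rewrite (eq_bigr (fun c => qq^-1 * (qq ^+ 2 * ((b == c)%:R * (b' == c)%:R)
     - qq * ((b == c)%:R * 1) - qq * ((b' == c)%:R * 1) + 1))); last first.
  by move=> c _; rewrite ger0_norm ?invr_ge0 ?ltW //; ring.
rewrite -mulr_sumr !big_split /= !sumrN -!mulr_sumr !sum_delta.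
rewrite sumr_const.
have -> : #|[pred x : Q | true]| = #|Q| by apply: eq_card.
rewrite -/qq /kap eq_sym natrB // -/qq.
have qn : qq != 0 by rewrite gt_eqF.
by case: (b' == b); rewrite /= ?mulr1 ?mulr0; field.
Qed.
End K.


Section K2.
Variable R : realType.

Lemma coef_lin_pow (c : R) n k : ((1 + c *: 'X) ^+ n)`_k = c ^+ k * ('C(n, k))%:R.
Proof.
elim: n k => [|n IH] k.
  by rewrite expr0 coef1; case: k => [|k]; rewrite ?bin0 ?bin0n ?expr0 ?mulr1 ?mulr0.
rewrite exprS mulrDl mul1r -scalerAl coefD coefZ coefXM IH.
case: k => [|k] /=; first by rewrite !bin0 !expr0 mulr0 addr0.
by rewrite IH binS natrD exprS; ring.
Qed.

Lemma kraw_poly (q N : nat) (Q : finType) (u v : {ffun 'I_N -> Q}) j :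
  kraw R q N j (hdist u v) =
  (\prod_(i < N) (1 + kap ((q - 1)%N%:R) (u i) (v i) *: 'X))`_j.
Proof.
set D := [set i | u i != v i].
have -> : \prod_(i < N) (1 + kap ((q - 1)%N%:R) (u i) (v i) *: 'X) =
   (1 + (-1) *: 'X) ^+ #|D| * (1 + ((q - 1)%N%:R : R) *: 'X) ^+ (N - #|D|).
  rewrite (bigID (mem D)) /=; congr (_ * _).
    by rewrite -prodr_const; apply: eq_big => // i; rewrite /kap inE => /negPf ->.
  have -> : (N - #|D|)%N = #|~: D| by have := cardsC D; rewrite card_ord; lia.
  rewrite -prodr_const; apply: eq_big => [i|i]; first by rewrite /= in_setC.
  by rewrite /kap inE negbK => /eqP ->; rewrite eqxx.
rewrite coefM /kraw /hdist -/D; apply: eq_bigr => l _.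
rewrite !coef_lin_pow; ring.
Qed.
End K2.

Local Close Scope ring_scope.

Lemma card_sum (T : finType) (P : pred T) : #|[set i | P i]| = \sum_i (P i : nat).
Proof.
rewrite -sum1_card big_mkcond /=; apply: eq_bigr => i _.
by rewrite inE; case: (P i).
Qed.

Lemma block_idx_inj s N : injective (fun p : 'I_s * 'I_N => block_idx p.1 p.2).
Proof.
move=> [t k] [t' k'] /(congr1 val) /= h.
have N0 : (0 < N)%N by apply: leq_ltn_trans (ltn_ord k).
have ht : t = t' :> nat.
  by have := congr1 (divn^~ N) h; rewrite !divnMDl // !divn_small // !addn0.
have hk : k = k' :> nat.
  have := congr1 (modn^~ N) h; rewrite /= !modnMDl !modn_small //.
by congr pair; apply: val_inj.
Qed.

Lemma hdist_blocks (Q : finType) s N (x y : {ffun 'I_(s * N) -> Q}) :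
  hdist x y = (\sum_(t < s) hdist (proj_block t x) (proj_block t y))%N.
Proof.
rewrite /hdist card_sum.
rewrite (eq_bigr (fun t : 'I_s => \sum_(k < N) (proj_block t x k != proj_block t y k : nat))); last by move=> t _; rewrite card_sum.
rewrite pair_big /=.
rewrite (reindex (fun p : 'I_s * 'I_N => block_idx p.1 p.2)) /=.
  by apply: eq_bigr => p _; rewrite /proj_block !ffunE.
apply: onW_bij; apply: inj_card_bij; first exact: block_idx_inj.
by rewrite card_prod !card_ord.
Qed.

Lemma hdist_le (Q : finType) N (u v : {ffun 'I_N -> Q}) : (hdist u v <= N)%N.
Proof. by rewrite /hdist; apply: leq_trans (max_card _) _; rewrite card_ord. Qed.

Lemma hdist_xx (Q : finType) N (u : {ffun 'I_N -> Q}) : hdist u u = 0%N.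
Proof. by rewrite /hdist card_sum big1 // => i _; rewrite eqxx. Qed.

Definition dvec (Q : finType) s N (x y : {ffun 'I_(s * N) -> Q}) : {ffun 'I_s -> 'I_N.+1} :=
  [ffun t => inord (hdist (proj_block t x) (proj_block t y))].

Lemma dvec_val (Q : finType) s N (x y : {ffun 'I_(s * N) -> Q}) t :
  (dvec x y t : nat) = hdist (proj_block t x) (proj_block t y).
Proof. by rewrite ffunE inordK // ltnS hdist_le. Qed.

Lemma dvec_xx (Q : finType) s N (x : {ffun 'I_(s * N) -> Q}) : dvec x x = zero_idx s N.
Proof. by apply/ffunP => t; apply: val_inj => /=; rewrite dvec_val hdist_xx ffunE. Qed.

Local Open Scope ring_scope.


Lemma kraw_pos (R : realType) (Q : finType) s N (C : {set {ffun 'I_(s * N) -> Q}})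
  (j : {ffun 'I_s -> 'I_N.+1}) :
  (0 < #|Q|)%N ->
  0 <= \sum_(x in C) \sum_(y in C) kraw_multi R #|Q| j (dvec x y).
Proof.
move=> hQ; apply: rep_pos.
pose P (t : 'I_s) (x y : {ffun 'I_(s * N) -> Q}) : {poly R} :=
  \prod_(i < N) (1 + kap ((#|Q| - 1)%N%:R) (proj_block t x i) (proj_block t y i) *: 'X).
apply: (@rep_ext _ _ (fun x y => \prod_(t <- index_enum 'I_s) (P t x y)`_(j t))).
  by move=> x y; rewrite /kraw_multi; apply: eq_bigr => t _; rewrite dvec_val kraw_poly.
apply: rep_prod => t; rewrite /P.
apply: (@polyrep_prod R _ _ (index_enum 'I_N) (fun i x y => 1 + kap ((#|Q| - 1)%N%:R) (proj_block t x i) (proj_block t y i) *: 'X) _ (j t)).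
move=> i; apply: polyrep_lin.
exact: (rep_comp (fun x => proj_block t x i) (rep_kap R hQ)).
Qed.

Theorem theorem4 (R : realType) (q r rho s d : nat) (Q : finType)
  (hq : (2 <= q)%N) (hr : (1 <= r)%N) (hrho : (2 <= rho)%N) (hs : (1 <= s)%N)
  (hQ : #|Q| = q)
  (C : {set {ffun 'I_(s * (r + rho - 1)%N) -> Q}})
  (hd : min_dist_eq C d)
  (hproj : forall t : 'I_s, min_dist_ge (proj_code t C) rho)
  (f : {ffun 'I_s -> 'I_(r + rho - 1)%N.+1} -> R)
  (hf_nonneg : forall j, j != zero_idx s (r + rho - 1)%N -> 0 <= f j)
  (hf_feas : forall i, i \in Tset s (r + rho - 1)%N rho d ->
      1 + \sum_(j | j != zero_idx s (r + rho - 1)%N)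
            f j * kraw_multi R q j i <= 0) :
  (#|C|%:R : R) <= 1 + \sum_(j | j != zero_idx s (r + rho - 1)%N)
            f j * kraw_multi R q j (zero_idx s (r + rho - 1)%N).
Proof.
move: hf_nonneg hf_feas hproj hd.
set N := (r + rho - 1)%N => hf_nonneg hf_feas hproj [[x0 [y0 [x0C _ _ _]]] hd].
set z := zero_idx s N.
pose F i := 1 + \sum_(j | j != z) f j * kraw_multi R q j i.
set c : R := #|C|%:R.
have cpos : 0 < c by rewrite ltr0n; apply/card_gt0P; exists x0.
have key1 : c * c <= \sum_(x in C) \sum_(y in C) F (dvec x y).
  have -> : \sum_(x in C) \sum_(y in C) F (dvec x y) =
      c * c + \sum_(j | j != z) f j * \sum_(x in C) \sum_(y in C) kraw_multi R q j (dvec x y).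
    rewrite /F.
    transitivity (\sum_(x in C) (c + \sum_(y in C) \sum_(j | j != z) f j * kraw_multi R q j (dvec x y))).
      by apply: eq_bigr => x _; rewrite big_split /= sumr_const.
    rewrite big_split /= sumr_const -mulr_natr; congr (_ + _).
    transitivity (\sum_(x in C) \sum_(j | j != z) \sum_(y in C) f j * kraw_multi R q j (dvec x y)).
      by apply: eq_bigr => x _; rewrite exchange_big.
    rewrite exchange_big; apply: eq_bigr => j _ /=.
    rewrite mulr_sumr; apply: eq_bigr => x _; by rewrite mulr_sumr.
  rewrite lerDl; apply: sumr_ge0 => j jz; apply: mulr_ge0; first exact: hf_nonneg.
  by rewrite -hQ; apply: kraw_pos; rewrite hQ; apply: leq_trans hq.
have key2 : \sum_(x in C) \sum_(y in C) F (dvec x y) <= c * F z.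
  rewrite mulrC /c mulr_natr -sumr_const; apply: ler_sum => x xC.
  rewrite (bigD1 x) //= dvec_xx gerDl; apply: sumr_le0 => y /andP [yC yx].
  apply: hf_feas; rewrite inE; apply/andP; split.
    rewrite (eq_bigr (fun t => hdist (proj_block t x) (proj_block t y))); last first.
      by move=> t _; rewrite dvec_val.
    by rewrite -hdist_blocks; apply: hd => //; rewrite eq_sym.
  apply/forallP => t; rewrite dvec_val.
  have [-> | ne] := eqVneq (proj_block t x) (proj_block t y); first by rewrite hdist_xx.
  apply/orP; right; apply: hproj ne; apply/imsetP; [exists x | exists y] => //.
have := le_trans key1 key2; rewrite ler_pM2l //.
Qed.
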